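(* Let $X, Y$ be finite input sets and $\mathcal{A}, \mathcal{B}$ finite output sets. Let $G$ be a bipartite Bell expression $G(Q) = \sum_{a\in\mathcal{A},b\in\mathcal{B},x\in X,y\in Y} \alpha_{a,b,x,y}\, Q(a,b|x,y)$ with coefficients $\alpha_{a,b,x,y}\ge 0$, normalized so that its classical (local) value satisfies $\omega_c(G)\le 1$. Let $\omega_{ns}(G)$ denote the maximum of $G(Q)$ over all bipartite no-signaling boxes $Q$. Then there exists a tripartite relativistic causal box $\{P(a,b,c|x,y,z)\}$ with $a,c\in\mathcal{A}$, $b\in\mathcal{B}$, $x,z\in X$, $y\in Y$ such that $$\sum_{a,b,x,y}\alpha_{a,b,x,y}\,P_{AB}(a,b|x,y)=\omega_{ns}(G)\quad\text{and}\quad \sum_{c,b,z,y}\alpha_{c,b,z,y}\,P_{CB}(c,b|z,y)=\omega_{ns}(G),$$ where $P_{AB}(a,b|x,y)=\sum_c P(a,b,c|x,y,z)$ and $P_{CB}(c,b|z,y)=\sum_a P(a,b,c|x,y,z)$ (both well defined by the relativistic causal constraints). That is, both pairs Alice–Bob and Bob–Charlie (with Charlie playing Alice's role) simultaneously attain the maximal no-signaling value of $G$.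
   Context: A bipartite box $\{Q(a,b|x,y)\}$ is a family of probability distributions over $(a,b)$ indexed by $(x,y)$; it is no-signaling if $\sum_b Q(a,b|x,y)$ is independent of $y$ and $\sum_a Q(a,b|x,y)$ is independent of $x$. The classical value $\omega_c(G)$ is the maximum of $G$ over local (convex mixtures of deterministic product) boxes. A tripartite box $\{P(a,b,c|x,y,z)\}$ (nonnegative, with $\sum_{a,b,c}P(a,b,c|x,y,z)=1$ for all $x,y,z$) is called relativistic causal (for the measurement configuration in which Bob's input may influence the correlations between Alice and Charlie) if it satisfies: (i) $\sum_a P(a,b,c|x,y,z)$ is independent of $x$ for all $y,z,b,c$; (ii) $\sum_c P(a,b,c|x,y,z)$ is independent of $z$ for all $x,y,a,b$; (iii) $\sum_{b,c} P(a,b,c|x,y,z)$ is independent of $(y,z)$ for all $x,a$; (iv) $\sum_{a,b} P(a,b,c|x,y,z)$ is independent of $(x,y)$ for all $z,c$. (Unlike full no-signaling, $\sum_b P(a,b,c|x,y,z)$ is not required to be independent of $y$.) *)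

(* Defs.v *)
From HB Require Import structures.
From mathcomp Require Import all_boot all_order all_algebra.
From mathcomp Require Import classical_sets reals.
Set Implicit Arguments. Unset Strict Implicit. Unset Printing Implicit Defensive.
Import Order.TTheory GRing.Theory Num.Theory.
Local Open Scope ring_scope.
Local Open Scope classical_set_scope.

Definition is_box2 (R : realType) (A B X Y : finType) (Q : A -> B -> X -> Y -> R) :=
  (forall a b x y, 0 <= Q a b x y) /\
  (forall x y, \sum_(a : A) \sum_(b : B) Q a b x y = 1).

Definition no_signaling2 (R : realType) (A B X Y : finType) (Q : A -> B -> X -> Y -> R) :=
  [/\ is_box2 Q,
      (forall a x y y', \sum_(b : B) Q a b x y = \sum_(b : B) Q a b x y') &
      (forall b x x' y, \sum_(a : A) Q a b x y = \sum_(a : A) Q a b x' y)].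

Definition local2 (R : realType) (A B X Y : finType) (Q : A -> B -> X -> Y -> R) :=
  exists w : ({ffun X -> A} * {ffun Y -> B})%type -> R,
    [/\ (forall l, 0 <= w l), \sum_l w l = 1 &
        (forall a b x y, Q a b x y = \sum_l w l * ((l.1 x == a) && (l.2 y == b))%:R)].

Definition bell_value (R : realType) (A B X Y : finType)
    (alpha : A -> B -> X -> Y -> R) (Q : A -> B -> X -> Y -> R) : R :=
  \sum_(a : A) \sum_(b : B) \sum_(x : X) \sum_(y : Y) alpha a b x y * Q a b x y.

Definition classical_value_le1 (R : realType) (A B X Y : finType)
    (alpha : A -> B -> X -> Y -> R) :=
  forall Q : A -> B -> X -> Y -> R, local2 Q -> bell_value alpha Q <= 1.

Definition omega_ns (R : realType) (A B X Y : finType)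
    (alpha : A -> B -> X -> Y -> R) : R :=
  sup [set r | exists Q : A -> B -> X -> Y -> R, no_signaling2 Q /\ r = bell_value alpha Q].

Definition relativistic_causal (R : realType) (A B X Y : finType)
    (P : A -> B -> A -> X -> Y -> X -> R) :=
  [/\ ((forall a b c x y z, 0 <= P a b c x y z) /\
       (forall x y z, \sum_(a : A) \sum_(b : B) \sum_(c : A) P a b c x y z = 1)),
      (forall y z b c x x', \sum_(a : A) P a b c x y z = \sum_(a : A) P a b c x' y z),
      (forall x y a b z z', \sum_(c : A) P a b c x y z = \sum_(c : A) P a b c x y z'),
      (forall x a y z y' z', \sum_(b : B) \sum_(c : A) P a b c x y z
                           = \sum_(b : B) \sum_(c : A) P a b c x y' z') &
      (forall z c x y x' y', \sum_(a : A) \sum_(b : B) P a b c x y z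
                           = \sum_(a : A) \sum_(b : B) P a b c x' y' z)].

(* Main.v *)
Require Import Defs.
From HB Require Import structures.
From mathcomp Require Import all_boot all_order all_algebra.
From mathcomp Require Import classical_sets reals.
From mathcomp Require Import all_classical all_reals all_analysis.
Import Order.TTheory GRing.Theory Num.Theory numFieldNormedType.Exports numFieldTopology.Exports.
Local Open Scope ring_scope.
Local Open Scope classical_set_scope.
Lemma cont_sum (R : realType) (T : topologicalType) (J : Type) (r : seq J)
  (F : J -> T -> R) : (forall j, continuous (F j)) ->
  continuous (fun g => \sum_(j <- r) F j g).
Proof.
move=> HF; elim: r => [|j r IH].
  under eq_fun do rewrite big_nil. exact: cst_continuous.
under eq_fun do rewrite big_cons.
move=> x; exact: (@continuousD _ _ _ (F j) (fun g => \sum_(j <- r) F j g) x (HF j x) (IH x)).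
Qed.

Lemma cont_cM (R : realType) (T : topologicalType) (c : R) (F : T -> R) :
  continuous F -> continuous (fun g => c * F g).
Proof.
move=> HF x; exact: (@continuousM _ _ (fun=> c) F x (@cst_continuous _ _ c x) (HF x)).
Qed.

Lemma closed_forall (T : topologicalType) (J : Type) (P : J -> set T) :
  (forall j, closed (P j)) -> closed [set g | forall j, P j g].
Proof.
move=> HP.
have -> : [set g | forall j, P j g] = \bigcap_(j in setT) P j.
  by apply/seteqP; split => g /= H j //; apply: H.
exact: closed_bigI.
Qed.

Lemma closed_eqF (R : realType) (T : topologicalType) (F G : T -> R) :
  continuous F -> continuous G -> closed [set g | F g = G g].
Proof.
move=> HF HG.
have -> : [set g | F g = G g] = (fun g => F g - G g) @^-1` [set 0].
  apply/seteqP; split => g /= H; first by rewrite H subrr.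
  by apply/eqP; rewrite -subr_eq0 H.
apply: preimage_closed; last exact: closed_eq.
move=> x _; exact: (@continuousD _ _ _ F (fun g => - G g) x (HF x) (continuousN (HG x))).
Qed.

Lemma closed_ge0 (R : realType) (T : topologicalType) (F : T -> R) :
  continuous F -> closed [set g | 0 <= F g].
Proof.
move=> HF; have -> : [set g | 0 <= F g] = F @^-1` [set x | 0 <= x] by [].
apply: preimage_closed; last exact: closed_ge.
by move=> x _; apply: HF.
Qed.
Lemma box_le1 (R : realType) (A B X Y : finType) (Q : A -> B -> X -> Y -> R) :
  is_box2 Q -> forall a b x y, Q a b x y <= 1.
Proof.
move=> [Q0 Q1] a b x y; rewrite -(Q1 x y).
rewrite (bigD1 a) //= (bigD1 b) //= -addrA ler_wpDr //.
apply: addr_ge0; first by apply: sumr_ge0 => i _; apply: Q0.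
by apply: sumr_ge0 => i _; apply: sumr_ge0 => j _; apply: Q0.
Qed.

Section MaxSec.
Variables (R : realType) (A B X Y : finType).
Hypotheses (hA : (0 < #|A|)%N) (hB : (0 < #|B|)%N).
Variable alpha : A -> B -> X -> Y -> R.

Let I := (A * B * X * Y)%type.
Let T := {ptws I -> R}.
Let toQ (g : T) : A -> B -> X -> Y -> R := fun a b x y => g (a, b, x, y).

Let pj (i : I) : continuous (fun g : T => g i) := @proj_continuous I (fun=> R) i.

Lemma exists_max_ns : exists Q : A -> B -> X -> Y -> R, no_signaling2 Q /\
  forall Q', no_signaling2 Q' -> bell_value alpha Q' <= bell_value alpha Q.
Proof.
pose S : set T := [set g | forall i, `[0, 1] (g i)].
pose E : set T := [set g | (forall a b x y, 0 <= toQ g a b x y) /\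
       (forall x y, \sum_(a : A) \sum_(b : B) toQ g a b x y = 1)]
   `&` [set g | forall a x y y', \sum_(b : B) toQ g a b x y = \sum_(b : B) toQ g a b x y']
   `&` [set g | forall b x x' y, \sum_(a : A) toQ g a b x y = \sum_(a : A) toQ g a b x' y].
have cS : compact S.
  by apply: (@tychonoff I (fun=> R) (fun=> `[0, 1]%classic)) => i; exact: segment_compact.
have cE : closed E.
  apply: closedI; [apply: closedI|].
  - apply: closedI.
    + apply: closed_forall => a; apply: closed_forall => b.
      apply: closed_forall => x; apply: closed_forall => y.
      exact: (@closed_ge0 _ _ (fun g : T => g (a, b, x, y)) (pj _)).
    + do 2 (apply: closed_forall => ?); apply: closed_eqF; last exact: cst_continuous.
      apply: cont_sum => a; apply: cont_sum => b; exact: pj.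
  - do 4 (apply: closed_forall => ?); apply: closed_eqF;
      apply: cont_sum => b; exact: pj.
  - do 4 (apply: closed_forall => ?); apply: closed_eqF;
      apply: cont_sum => b; exact: pj.
have cK := compact_closedI cS cE.
pose f (g : T) := bell_value alpha (toQ g).
have cf : continuous f.
  do 4 (apply: cont_sum => ?); apply: cont_cM; exact: pj.
have K0 : (S `&` E) !=set0.
  pose c0 : R := ((#|A| * #|B|)%N%:R)^-1.
  have n0 : 0 < ((#|A| * #|B|)%N%:R : R) by rewrite ltr0n muln_gt0 hA hB.
  have c00 : 0 <= c0 by rewrite invr_ge0 ltW.
  exists (fun=> c0 : R); split.
    move=> i /=; rewrite in_itv /= c00 /= invf_le1 //.
    by rewrite ler1n muln_gt0 hA hB.
  split => //; split => //; split => //.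
  move=> x y; rewrite /toQ /=.
  under eq_bigr do rewrite sumr_const.
  rewrite sumr_const -mulrnA -mulr_natr /c0 mulnC mulVf //.
  by apply: lt0r_neq0; rewrite ltr0n muln_gt0 hA hB.
have [c cKc cmax] := compact_EVT_max K0 cK (@continuous_subspaceT _ _ (S `&` E) f cf).
have NSE : forall g : T, (S `&` E) g <-> no_signaling2 (toQ g).
  move=> g; split.
    by move=> [_ [[[H1 H2] H3] H4]].
  move=> [[H1 H2] H3 H4]; split; last by split; [split|].
  move=> [[[a b] x] y]; rewrite /= in_itv /=; apply/andP; split; first exact: H1.
  by have := @box_le1 R A B X Y (toQ g) (conj H1 H2) a b x y.
exists (toQ c); split; first by apply/NSE; rewrite -inE.
move=> Q' HQ'.
pose g' : T := fun i => Q' i.1.1.1 i.1.1.2 i.1.2 i.2.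
exact: (cmax g' (mem_set (proj2 (NSE g') HQ'))).
Qed.
End MaxSec.

Lemma omega_attained (R : realType) (A B X Y : finType)
  (alpha : A -> B -> X -> Y -> R) (Q : A -> B -> X -> Y -> R) :
  no_signaling2 Q ->
  (forall Q', no_signaling2 Q' -> bell_value alpha Q' <= bell_value alpha Q) ->
  omega_ns alpha = bell_value alpha Q.
Proof.
move=> HQ Hmax; rewrite /omega_ns; apply/eqP; rewrite eq_le; apply/andP; split.
  apply: ge_sup; first by exists (bell_value alpha Q), Q.
  by move=> r [Q' [HQ' ->]]; exact: Hmax.
apply: sup_upper_bound; last by exists Q.
split; first by exists (bell_value alpha Q), Q.
by exists (bell_value alpha Q) => r [Q' [HQ' ->]]; exact: Hmax.
Qed.

Section Construct.
Variables (R : realType) (A B X Y : finType) (Q : A -> B -> X -> Y -> R).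
Hypothesis HQ : no_signaling2 Q.

Definition Dn b x y := \sum_(a' : A) Q a' b x y.
Definition Pc a b c x y z := Q a b x y * Q c b z y / Dn b x y.

Lemma Q0 a b x y : 0 <= Q a b x y.
Proof. by case: HQ => -[H _] _ _. Qed.

Lemma Dn_indep b x z y : Dn b x y = Dn b z y.
Proof. by case: HQ => _ _ H; apply: H. Qed.

Lemma Dn0 a b x y : Dn b x y = 0 -> Q a b x y = 0.
Proof.
move=> H; apply: (psumr_eq0P _ H) => // i _; exact: Q0.
Qed.

Lemma sumPc_c a b x y z : \sum_(c : A) Pc a b c x y z = Q a b x y.
Proof.
rewrite /Pc -big_distrl /= -big_distrr /=.
have -> : \sum_(c : A) Q c b z y = Dn b x y by rewrite (Dn_indep b x z y).
have [D0|Dn0'] := eqVneq (Dn b x y) 0.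
  by rewrite (@Dn0 a b x y D0) !mul0r.
by rewrite -mulrA mulfV ?mulr1.
Qed.

Lemma sumPc_a b c x y z : \sum_(a : A) Pc a b c x y z = Q c b z y.
Proof.
rewrite /Pc -big_distrl /= -big_distrl /=.
rewrite -/(Dn b x y).
have [D0|Dn0'] := eqVneq (Dn b x y) 0.
  by rewrite (Dn_indep b x z y) in D0; rewrite (@Dn0 c b z y D0) !mulr0 mul0r.
by rewrite mulrAC mulfV ?mul1r.
Qed.

End Construct.
Arguments sumPc_c {R A B X Y Q} HQ a b x y z.
Arguments sumPc_a {R A B X Y Q} HQ b c x y z.
Arguments Pc {R A B X Y} Q a b c x y z.

Theorem proposition1 (R : realType) (A B X Y : finType)
    (hA : (0 < #|A|)%N) (hB : (0 < #|B|)%N) (hX : (0 < #|X|)%N) (hY : (0 < #|Y|)%N)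
    (alpha : A -> B -> X -> Y -> R)
    (halpha : forall a b x y, 0 <= alpha a b x y)
    (hc : classical_value_le1 alpha) :
  exists P : A -> B -> A -> X -> Y -> X -> R,
    [/\ relativistic_causal P,
        (forall z : X,
           \sum_(a : A) \sum_(b : B) \sum_(x : X) \sum_(y : Y)
              alpha a b x y * (\sum_(c : A) P a b c x y z) = omega_ns alpha) &
        (forall x : X,
           \sum_(c : A) \sum_(b : B) \sum_(z : X) \sum_(y : Y)
              alpha c b z y * (\sum_(a : A) P a b c x y z) = omega_ns alpha)].
Proof.
have [Q [HQ Hmax]] := @exists_max_ns R A B X Y hA hB alpha.
have Hom := @omega_attained R A B X Y alpha Q HQ Hmax.
have [[Qn Q1] NSA NSB] := HQ.
exists (Pc Q); split.
- split.
  + split.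
      move=> a b c x y z; rewrite /Pc divr_ge0 ?mulr_ge0 //.
      by apply: sumr_ge0 => i _.
    move=> x y z; rewrite -(Q1 x y); apply: eq_bigr => a _.
    by apply: eq_bigr => b _; rewrite (sumPc_c HQ).
  + by move=> y z b c x x'; rewrite !(sumPc_a HQ).
  + by move=> x y a b z z'; rewrite !(sumPc_c HQ).
  + move=> x a y z y' z'.
    under eq_bigr do rewrite (sumPc_c HQ) //.
    under [RHS]eq_bigr do rewrite (sumPc_c HQ) //.
    exact: NSA.
  + move=> z c x y x' y'.
    rewrite exchange_big [RHS]exchange_big /=.
    under eq_bigr do rewrite (sumPc_a HQ) //.
    under [RHS]eq_bigr do rewrite (sumPc_a HQ) //.
    exact: NSA.
- move=> z; rewrite Hom /bell_value.
  apply: eq_bigr => a _; apply: eq_bigr => b _; apply: eq_bigr => x _.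
  by apply: eq_bigr => y _; rewrite (sumPc_c HQ).
- move=> x; rewrite Hom /bell_value.
  apply: eq_bigr => a _; apply: eq_bigr => b _; apply: eq_bigr => z _.
  by apply: eq_bigr => y _; rewrite (sumPc_a HQ).
Qed.
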